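(* Let $c<\frac16$. In the containment game on $\mathbb{Z}^2_{8}$ with Container strength $q=1$ (so Container deletes at most one vertex per turn) and spreading function $g(t)=c\sqrt{t}$, Container wins for every finite initial occupied set $\mathcal{B}_0$. Moreover, Container has a winning strategy which deletes exactly the vertices of a single row $\{(x,H): 0\le x\le H\}$ of $\mathbb{Z}^2_{8}$, where the height $H$ depends only on the initial occupied set $\mathcal{B}_0$.
   Context: $\mathbb{Z}^2_{8}$ (the ''eighth plane'') is the graph with vertex set $\{(x,y)\in\mathbb{Z}^2: 0\le x\le y\}$ and edge set $\{((x,y),(x+i,y+1)) : 0\le x\le y,\ i\in\{0,1\}\}$. The containment game $(G,q,g)$, for real $q>0$ and a spreading function $g$, is a full-information game between Container and Spreader on an infinite graph $G$, starting from a finite set $\mathcal{B}_0$ of occupied vertices. At turn $t=1,2,\dots$, first Container deletes at most $\lfloor tq\rfloor-\lfloor (t-1)q\rfloor$ non-occupied vertices from the current graph; then Spreader chooses $g(t)$ vertices of the remaining graph at distance at most one from $\mathcal{B}_{t-1}$ and adds them to form $\mathcal{B}_t$. Container wins if after some time no new vertices become occupied; otherwise Spreader wins. *)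

(* Defs.v *)
From Stdlib Require Import Reals List Arith Lia.
Open Scope R_scope.

(* Vertices of Z^2_8: pairs (x,y) of naturals with x <= y. *)
Definition V : Type := (nat * nat)%type.

Definition vert (v : V) : Prop := (fst v <= snd v)%nat.

Definition edge8 (u v : V) : Prop :=
  vert u /\ snd v = S (snd u) /\ (fst v = fst u \/ fst v = S (fst u)).

Definition adj (u v : V) : Prop := edge8 u v \/ edge8 v u.

Definition row (H : nat) (v : V) : Prop := snd v = H /\ (fst v <= H)%nat.

(* A Container strategy: at turn t it sees the full history
   [B_0; ...; B_{t-1}] of occupied sets and deletes at most one vertex
   (q = 1, so floor(t q) - floor((t-1) q) = 1). *)
Definition cstrategy : Type := nat -> list (V -> Prop) -> option V.

Definition hist (B : nat -> V -> Prop) (t : nat) : list (V -> Prop) :=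
  map B (seq 0 t).

Definition deleted (sigma : cstrategy) (B : nat -> V -> Prop) (t : nat) (v : V) : Prop :=
  exists s, (1 <= s <= t)%nat /\ sigma s (hist B s) = Some v.

(* B is a legal sequence of occupied sets in the game (Z^2_8, 1, c sqrt t)
   starting from the finite set B0, against Container strategy sigma:
   at turn t (after Container's deletion), Spreader picks at most
   c*sqrt(t) vertices of the remaining graph at distance <= 1 from B_{t-1}. *)
Definition legal_play (c : R) (B0 : list V) (sigma : cstrategy)
    (B : nat -> V -> Prop) : Prop :=
  (forall v, B 0%nat v <-> In v B0) /\
  forall t : nat, (1 <= t)%nat ->
    exists S : list V,
      INR (length S) <= c * sqrt (INR t) /\
      (forall v, B t v <-> (B (t - 1)%nat v \/ In v S)) /\
      (forall v, In v S ->
         vert v /\ ~ deleted sigma B t v /\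
         (B (t - 1)%nat v \/ exists u, B (t - 1)%nat u /\ adj u v)).

(* Main.v *)
Require Import Defs.
From Stdlib Require Import Reals List Arith Lia.
From Stdlib Require Import Classical ClassicalEpsilon Psatz.
Import ListNotations.
Open Scope R_scope.
Local Open Scope nat_scope.

Definition decP (P : Prop) : bool :=
  if excluded_middle_informative P then true else false.

Lemma decP_spec (P : Prop) : decP P = true <-> P.
Proof. unfold decP; destruct (excluded_middle_informative P); split; intuition congruence. Qed.

Definition cntl {A} (P : A -> Prop) (l : list A) : nat :=
  length (filter (fun x => decP (P x)) l).

Definition cnt (P : nat -> Prop) (m : nat) : nat := cntl P (seq 0 m).

Lemma in_filt {A} (P : A -> Prop) l x : In x (filter (fun x => decP (P x)) l) <-> In x l /\ P x.
Proof. rewrite filter_In, decP_spec; tauto. Qed.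

Lemma nodup_filt (P : nat -> Prop) m : NoDup (filter (fun x => decP (P x)) (seq 0 m)).
Proof. apply NoDup_filter, seq_NoDup. Qed.

Lemma cnt_mono (P Q : nat -> Prop) m :
  (forall x, x < m -> P x -> Q x) -> cnt P m <= cnt Q m.
Proof.
  intros HPQ. unfold cnt, cntl. apply NoDup_incl_length; [apply nodup_filt|].
  intros x Hx. apply in_filt in Hx as [Hx HP]. apply in_seq in Hx.
  apply in_filt; split; [apply in_seq; lia| apply HPQ; auto; lia].
Qed.

Lemma cnt_remove (P Q : nat -> Prop) m x0 :
  x0 < m -> Q x0 -> (forall x, x < m -> P x -> Q x /\ x <> x0) -> cnt P m + 1 <= cnt Q m.
Proof.
  intros Hx0 HQ HPQ. unfold cnt, cntl.
  replace (length (filter (fun x => decP (P x)) (seq 0 m)) + 1)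
    with (length (x0 :: filter (fun x => decP (P x)) (seq 0 m))) by (simpl; lia).
  apply NoDup_incl_length.
  - constructor; [|apply nodup_filt]. intros Hin. apply in_filt in Hin as [Hs HP].
    apply in_seq in Hs. destruct (HPQ x0); auto; lia.
  - intros x [<-|Hx].
    + apply in_filt; split; auto. apply in_seq; lia.
    + apply in_filt in Hx as [Hx HP]. apply in_seq in Hx.
      apply in_filt; split; [apply in_seq; lia| apply HPQ; auto; lia].
Qed.

Lemma cnt_two (P : nat -> Prop) m a b :
  a < m -> b < m -> a <> b -> P a -> P b -> 2 <= cnt P m.
Proof.
  intros. unfold cnt, cntl.
  change 2 with (length [a; b]). apply NoDup_incl_length.
  - constructor; [simpl; intuition|]. constructor; [simpl; auto|constructor].
  - intros x [<-|[<-|[]]]; apply in_filt; split; auto; apply in_seq; lia.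
Qed.

Lemma cnt_zero (P : nat -> Prop) m : (forall x, x < m -> ~ P x) -> cnt P m = 0.
Proof.
  intros HP. unfold cnt, cntl. destruct (filter _ _) eqn:E; auto.
  exfalso. assert (In n (n :: l)) by (left; auto). rewrite <- E in H.
  apply in_filt in H as [Hs HPn]. apply in_seq in Hs. apply (HP n); auto; lia.
Qed.

Lemma cnt_pos (P : nat -> Prop) m : 1 <= cnt P m -> exists x, x < m /\ P x.
Proof.
  intros H. apply NNPP; intros Hn. rewrite cnt_zero in H; [lia|].
  intros x Hx HPx; apply Hn; eauto.
Qed.

Lemma cnt_image (P : nat -> Prop) m r (f : nat -> nat) :
  (forall x, x < m -> P x -> exists j, j < r /\ x = f j) -> cnt P m <= r.
Proof.
  intros Hf. unfold cnt, cntl. transitivity (length (map f (seq 0 r)));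
    [|rewrite length_map, length_seq; auto].
  apply NoDup_incl_length; [apply nodup_filt|].
  intros x Hx. apply in_filt in Hx as [Hs HP]. apply in_seq in Hs.
  destruct (Hf x) as [j [Hj ->]]; [lia|auto|]. apply in_map, in_seq; lia.
Qed.

Lemma cntl_mono {A} (P Q : A -> Prop) l :
  (forall x, In x l -> P x -> Q x) -> cntl P l <= cntl Q l.
Proof.
  induction l as [|a l IH]; intros HPQ; simpl; auto.
  unfold cntl in *; simpl.
  destruct (decP (P a)) eqn:E1, (decP (Q a)) eqn:E2; simpl.
  - specialize (IH (fun x Hx => HPQ x (or_intror Hx))); lia.
  - apply (proj1 (decP_spec _)) in E1. assert (Q a) by (apply HPQ; [left; reflexivity | exact E1]).
    apply (proj2 (decP_spec _)) in H; congruence.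
  - specialize (IH (fun x Hx => HPQ x (or_intror Hx))); lia.
  - specialize (IH (fun x Hx => HPQ x (or_intror Hx))); lia.
Qed.

Lemma cntl_strict {A} (P Q : A -> Prop) l y :
  (forall x, In x l -> P x -> Q x) -> In y l -> Q y -> ~ P y -> cntl P l < cntl Q l.
Proof.
  induction l as [|a l IH]; intros HPQ Hy HQ HnP; [destruct Hy|].
  unfold cntl in *; simpl.
  assert (Hm := cntl_mono P Q l (fun x Hx => HPQ x (or_intror Hx))). unfold cntl in Hm.
  destruct Hy as [Heq|Hy].
  - subst a. destruct (decP (P y)) eqn:E1; [apply (proj1 (decP_spec _)) in E1; contradiction|].
    assert (decP (Q y) = true) by (apply decP_spec; auto). rewrite H; simpl; lia.
  - specialize (IH (fun x Hx => HPQ x (or_intror Hx)) Hy HQ HnP).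
    destruct (decP (P a)) eqn:E1, (decP (Q a)) eqn:E2; simpl; try lia.
    apply (proj1 (decP_spec _)) in E1. assert (Q a) by (apply HPQ; [left; reflexivity | exact E1]).
    apply (proj2 (decP_spec _)) in H; congruence.
Qed.

Lemma cntl_le_length {A} (P : A -> Prop) l : cntl P l <= length l.
Proof. unfold cntl. induction l; simpl; auto. destruct (decP (P a)); simpl; lia. Qed.

Lemma exists_least (P : nat -> Prop) : (exists k, P k) -> exists k, P k /\ forall k', P k' -> k <= k'.
Proof.
  intros [k Hk]. apply NNPP; intros Hn.
  assert (forall m, forall j, j <= m -> ~ P j).
  { induction m; intros j Hj HPj.
    - apply Hn; exists j; split; auto; intros; lia.
    - apply Hn; exists j; split; auto. intros k' Hk'.
      destruct (le_lt_dec j k'); auto. exfalso; apply (IHm k'); auto; lia. }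
  apply (H k k); auto.
Qed.

Lemma stabilize (f : nat -> nat) M :
  (forall t, f t <= f (S t)) -> (forall t, f t <= M) ->
  exists T, forall t, T <= t -> f t = f T.
Proof.
  intros Hm HM.
  assert (Hmono : forall a b, a <= b -> f a <= f b).
  { intros a b Hab; induction Hab; auto. specialize (Hm m); lia. }
  assert (forall d T0, M - f T0 <= d -> exists T, forall t, T <= t -> f t = f T).
  { induction d; intros T0 Hd.
    - exists T0; intros t Ht. specialize (Hmono _ _ Ht). specialize (HM t). lia.
    - destruct (classic (exists t, T0 <= t /\ f t <> f T0)) as [[t [Ht Hne]]|Hno].
      + apply (IHd t). specialize (Hmono _ _ Ht). specialize (HM t). lia.
      + exists T0; intros t Ht. apply NNPP; intros Hne; apply Hno; eauto. }
  apply (H (M - f 0) 0); auto.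
Qed.

Lemma NoDup_concat_map {A B} (f : A -> list B) (X : list A) :
  NoDup X -> (forall x, In x X -> NoDup (f x)) ->
  (forall x y w, In x X -> In y X -> x <> y -> In w (f x) -> ~ In w (f y)) ->
  NoDup (concat (map f X)).
Proof.
  induction X as [|a X IH]; intros HX Hf Hd; simpl; [constructor|].
  inversion HX; subst. apply NoDup_app.
  - apply Hf; simpl; auto.
  - apply IH; [exact H2| intros x Hx; apply Hf; simpl; auto|].
    intros x y w Hx Hy; apply Hd; simpl; auto.
  - intros w Hw Hin. apply in_concat in Hin as [l [Hl Hwl]].
    apply in_map_iff in Hl as [y [<- Hy]].
    apply (Hd a y w); simpl; auto. intros ->; contradiction.
Qed.

Lemma length_concat_map {A B} (f : A -> list B) (X : list A) m :
  (forall x, In x X -> m <= length (f x)) -> length X * m <= length (concat (map f X)).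
Proof.
  induction X as [|a X IH]; intros Hf; simpl; auto.
  rewrite length_app. assert (Ha := Hf a (or_introl eq_refl)).
  assert (IH' := IH (fun x Hx => Hf x (or_intror Hx))). lia.
Qed.

Definition dst (H : nat) (u : V) (x : nat) : nat :=
  (H - snd u) + 2 * Nat.max (fst u - x) (x - (fst u + (H - snd u))).

Lemma dst_adj H u v x : adj u v -> snd u <= H -> snd v <= H -> dst H u x <= dst H v x + 1.
Proof.
  destruct u as [a y], v as [b z]; unfold adj, edge8, vert, dst; simpl. intros; lia.
Qed.

Lemma dst_depth H u x : H - snd u <= dst H u x.
Proof. unfold dst; lia. Qed.

Lemma adj_disp u v : adj u v ->
  fst v <= fst u + 1 /\ fst u <= fst v + 1 /\ snd v <= snd u + 1 /\ snd u <= snd v + 1.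
Proof. destruct u as [a y], v as [b z]; unfold adj, edge8, vert; simpl; lia. Qed.

Definition p1 (g t : nat) : nat := ((t-1)/(g-1))*g + (t-1) mod (g-1) + 1.

Definition lev_le (H : nat) (B : V -> Prop) (k x : nat) : Prop :=
  exists u, B u /\ snd u <= H /\ dst H u x <= k.

Lemma lev_le_mono H B k k' x : k <= k' -> lev_le H B k x -> lev_le H B k' x.
Proof. intros Hk [u [Hu [Hs Hd]]]; exists u; repeat split; auto; lia. Qed.

Definition Spec H (B : V -> Prop) (prev : list nat) (x : nat) : Prop :=
  x <= H /\ ~ In x prev /\ exists k, lev_le H B k x /\
    forall x' k', x' <= H -> ~ In x' prev -> lev_le H B k' x' -> k <= k'.

Definition greedy H (B : V -> Prop) (prev : list nat) : option nat :=
  match excluded_middle_informative (exists x, Spec H B prev x) with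
  | left h => Some (proj1_sig (constructive_indefinite_description _ h))
  | right _ => None
  end.

Lemma greedy_some H B prev x0 : greedy H B prev = Some x0 ->
  x0 <= H /\ ~ In x0 prev /\
  forall x' k', x' <= H -> ~ In x' prev -> lev_le H B k' x' -> lev_le H B k' x0.
Proof.
  unfold greedy. destruct (excluded_middle_informative _) as [h|h]; [|discriminate].
  destruct (constructive_indefinite_description _ h) as [x [Hx [Hp [k [Hk Hmin]]]]]; simpl.
  intros E; injection E as <-. repeat split; auto.
  intros x' k' Hx' Hp' Hl. apply (lev_le_mono _ _ k); eauto.
Qed.

Lemma greedy_none H B prev : greedy H B prev = None ->
  forall x' k', x' <= H -> ~ In x' prev -> ~ lev_le H B k' x'.
Proof.
  unfold greedy. destruct (excluded_middle_informative _) as [h|h]; [discriminate|].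
  intros _ x' k' Hx' Hp' Hl. apply h.
  destruct (exists_least (fun k => exists x, x <= H /\ ~ In x prev /\ lev_le H B k x))
    as [k [[x [Hx [Hp Hk]]] Hmin]]; [eauto|].
  exists x; repeat split; auto. exists k; split; auto.
  intros x'' k'' ? ? ?; apply Hmin; eauto.
Qed.

Definition choose_turn H t1 g (Bf : nat -> V -> Prop) (t : nat) (prev : list nat) : option nat :=
  if t <=? t1 then Some (p1 g t) else greedy H (Bf (t-1)) prev.

Fixpoint dels H t1 g (Bf : nat -> V -> Prop) (t : nat) : list nat :=
  match t with
  | 0 => []
  | S t' => match choose_turn H t1 g Bf (S t') (dels H t1 g Bf t') with
            | Some x => x :: dels H t1 g Bf t'
            | None => dels H t1 g Bf t'
            end
  end.

Definition Bof (l : list (V -> Prop)) (i : nat) : V -> Prop := nth i l (fun _ => False).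

Definition sig H t1 g : cstrategy := fun t l =>
  match t with
  | 0 => None
  | S t' => option_map (fun x => (x, H)) (choose_turn H t1 g (Bof l) t (dels H t1 g (Bof l) t'))
  end.

Lemma dels_agree H t1 g Bf Bf' t : (forall i, i < t -> Bf i = Bf' i) ->
  dels H t1 g Bf t = dels H t1 g Bf' t.
Proof.
  induction t; intros Hag; simpl; auto.
  rewrite IHt by (intros; apply Hag; lia).
  unfold choose_turn. rewrite (Hag (S t - 1)) by lia. reflexivity.
Qed.

Lemma Bof_hist B t i : i < t -> Bof (hist B t) i = B i.
Proof.
  intros Hi. unfold Bof, hist.
  rewrite nth_indep with (d' := B 0) by (rewrite length_map, length_seq; auto).
  rewrite map_nth, seq_nth; auto.
Qed.

Lemma sig_hist H t1 g B t : 1 <= t ->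
  sig H t1 g t (hist B t) =
  option_map (fun x => (x, H)) (choose_turn H t1 g B t (dels H t1 g B (t-1))).
Proof.
  intros Ht. destruct t as [|t']; [lia|]. simpl. replace (t' - 0) with t' by lia.
  rewrite (dels_agree H t1 g (Bof (hist B (S t'))) B t') by (intros; apply Bof_hist; lia).
  unfold choose_turn. rewrite Bof_hist by lia. reflexivity.
Qed.

Lemma dels_in H t1 g B t s x : 1 <= s <= t ->
  choose_turn H t1 g B s (dels H t1 g B (s-1)) = Some x -> In x (dels H t1 g B t).
Proof.
  induction t; intros Hs Hc; [lia|].
  simpl. destruct (Nat.eq_dec s (S t)) as [->|Hne].
  - replace (S t - 1) with t in Hc by lia. rewrite Hc; left; auto.
  - assert (In x (dels H t1 g B t)) by (apply IHt; auto; lia).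
    destruct (choose_turn H t1 g B (S t) (dels H t1 g B t)); simpl; tauto.
Qed.

Lemma dels_deleted H t1 g B t x : In x (dels H t1 g B t) -> deleted (sig H t1 g) B t (x, H).
Proof.
  induction t; simpl; [tauto|]. intros Hin.
  destruct (choose_turn H t1 g B (S t) (dels H t1 g B t)) eqn:E.
  - destruct Hin as [<-|Hin].
    + exists (S t); split; [lia|]. rewrite sig_hist by lia. simpl. replace (t - 0) with t by lia.
      rewrite E; reflexivity.
    + destruct (IHt Hin) as [s [Hs Hsig]]; exists s; split; auto; lia.
  - destruct (IHt Hin) as [s [Hs Hsig]]; exists s; split; auto; lia.
Qed.

Lemma dels_mono H t1 g B t t' x : t <= t' -> In x (dels H t1 g B t) -> In x (dels H t1 g B t').
Proof.
  induction 1; auto. intros Hin; simpl. destruct (choose_turn H t1 g B (S m) (dels H t1 g B m)); simpl; auto.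
Qed.

Lemma dels_step_gt H t1 g B t : t1 <= t ->
  dels H t1 g B (S t) = match greedy H (B t) (dels H t1 g B t) with
                        | Some x => x :: dels H t1 g B t | None => dels H t1 g B t end.
Proof.
  intros Ht. simpl. unfold choose_turn.
  destruct (S t <=? t1) eqn:E; [apply Nat.leb_le in E; lia|].
  replace (S t - 1) with t by lia. reflexivity.
Qed.

Section Game.
Variables (c : R) (B0 : list V) (B : nat -> V -> Prop) (Sf : nat -> list V) (h0 n g H t1 W : nat).
Hypothesis Hc : (c < 1/6)%R.
Hypothesis HB0 : forall v, B 0 v <-> In v B0.
Hypothesis Hh0 : forall v, In v B0 -> snd v <= h0 /\ vert v.
Hypothesis HS : forall t, 1 <= t ->
  (INR (length (Sf t)) <= c * sqrt (INR t))%R /\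
  (forall v, B t v <-> B (t-1) v \/ In v (Sf t)) /\
  (forall v, In v (Sf t) -> vert v /\ ~ deleted (sig H t1 g) B t v /\
                            (B (t-1) v \/ exists u, B (t-1) u /\ adj u v)).
Hypothesis Hn : n = 3*h0+3.
Hypothesis Hg : g = 4*n.
Hypothesis HH : H = g*n.
Hypothesis Ht1 : t1 = H - n.
Hypothesis HW : W = 2*h0+2.

Lemma B_step t v : B (S t) v <-> B t v \/ In v (Sf (S t)).
Proof. destruct (HS (S t)) as [_ [HB _]]; [lia|]. rewrite HB. simpl. rewrite Nat.sub_0_r. tauto. Qed.

Lemma Sf_prop t v : In v (Sf (S t)) -> vert v /\ ~ deleted (sig H t1 g) B (S t) v /\
                            (B t v \/ exists u, B t u /\ adj u v).
Proof. destruct (HS (S t)) as [_ [_ HP]]; [lia|]. intros Hv. specialize (HP v Hv).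
  simpl in HP. rewrite Nat.sub_0_r in HP. exact HP. Qed.

Lemma B_mono s t v : s <= t -> B s v -> B t v.
Proof. induction 1; auto. intros Hs. apply B_step; left; auto. Qed.

Lemma B_height t v : B t v -> snd v <= h0 + t /\ vert v.
Proof.
  revert v; induction t; intros v Hv.
  - apply HB0 in Hv. destruct (Hh0 v Hv); split; auto; lia.
  - apply B_step in Hv as [Hv|Hv].
    + destruct (IHt v Hv); split; auto; lia.
    + destruct (Sf_prop t v Hv) as [Hvv [_ [Hb|[u [Hu Ha]]]]].
      * destruct (IHt v Hb); split; auto; lia.
      * destruct (IHt u Hu). apply adj_disp in Ha. split; auto; lia.
Qed.

Lemma Sf_in_B tau w : 1 <= tau -> In w (Sf tau) -> B tau w.
Proof. intros Ht Hw. destruct tau; [lia|]. apply B_step; auto. Qed.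

Definition created s t w := exists tau, s < tau <= t /\ In w (Sf tau).

Definition disp m (w v : V) := fst w <= fst v + m /\ fst v <= fst w + m /\
                               snd w <= snd v + m /\ snd v <= snd w + m.

Lemma chain s m v : B (s + m) v -> exists u l, B s u /\ NoDup l /\
  (forall w, In w l -> created s (s + m) w /\ disp m w v) /\ snd v <= snd u + length l.
Proof.
  revert v; induction m; intros v Hv.
  - rewrite Nat.add_0_r in Hv. exists v, [].
    split; [exact Hv|split; [constructor|split; [intros w []|simpl; lia]]].
  - rewrite Nat.add_succ_r in Hv.
    destruct (classic (B (s + m) v)) as [Hb|Hnb].
    + destruct (IHm v Hb) as [u [l [Hu [Hnd [Hl Hs]]]]].
      exists u, l; split; [auto|split; [auto|split; [|auto]]].
      intros w Hwl. destruct (Hl w Hwl) as [[tau [Ht Hw]] Hd]. split.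
      * exists tau; split; auto; lia.
      * unfold disp in *; lia.
    + apply B_step in Hv as [Hv|Hv]; [contradiction|].
      destruct (Sf_prop _ v Hv) as [_ [_ [Hb|[w [Hw Ha]]]]]; [contradiction|].
      destruct (IHm w Hw) as [u [l [Hu [Hnd [Hl Hs]]]]].
      apply adj_disp in Ha.
      exists u, (v :: l); split; [auto|split; [|split]].
      * constructor; auto. intros Hin. destruct (Hl v Hin) as [[tau [Ht Hw']] _].
        apply Hnb. apply (B_mono tau); [lia|]. apply Sf_in_B; auto; lia.
      * intros w' [<-|Hw'].
        -- split; [exists (S (s + m)); split; auto; lia|unfold disp; lia].
        -- destruct (Hl w' Hw') as [[tau [Ht Hw'']] Hd]. split.
           ++ exists tau; split; auto; lia.
           ++ unfold disp in *; lia.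
      * simpl; lia.
Qed.

Lemma n_pos : 3 <= n. Proof. lia. Qed.

Lemma Sf_len tau : 1 <= tau <= H -> 3 * length (Sf tau) <= n.
Proof.
  intros Ht. destruct (HS tau) as [Hl _]; [lia|].
  assert (Hsq : (sqrt (INR tau) <= INR (2*n))%R).
  { rewrite <- (sqrt_square (INR (2*n))) by apply pos_INR.
    apply sqrt_le_1_alt. rewrite <- mult_INR. apply le_INR. nia. }
  assert (Hs0 := sqrt_pos (INR tau)).
  destruct (Rle_or_lt c 0) as [Hc0|Hc0].
  - assert (INR (length (Sf tau)) <= 0)%R by nra.
    assert (length (Sf tau) = 0) by (apply (INR_le _ 0) in H0; lia). lia.
  - assert (INR (length (Sf tau)) <= c * INR (2*n))%R by nra.
    rewrite mult_INR in H0. simpl in H0.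
    assert (Hn0 : (0 < INR n)%R) by (apply lt_INR with (n := 0); lia).
    assert (INR (3 * length (Sf tau)) < INR n)%R by (rewrite mult_INR; simpl; nra).
    apply INR_lt in H1. lia.
Qed.

Lemma p1_le s : 1 <= s <= t1 -> 1 <= p1 g s <= H.
Proof.
  intros Hs. unfold p1.
  assert (Hg1 : g - 1 <> 0) by lia.
  assert (Hd := Nat.div_mod (s - 1) (g - 1) Hg1).
  assert (Hm := Nat.mod_upper_bound (s - 1) (g - 1) Hg1).
  set (q := (s - 1) / (g - 1)) in *. set (r := (s - 1) mod (g - 1)) in *.
  assert (q < n) by nia. nia.
Qed.

Lemma p1_surj x : x <= H -> x mod g <> 0 -> exists s, 1 <= s <= t1 /\ p1 g s = x.
Proof.
  intros Hx Hm. assert (Hg0 : g <> 0) by lia.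
  assert (Hd := Nat.div_mod x g Hg0). assert (Hu := Nat.mod_upper_bound x g Hg0).
  set (j := x / g) in *. set (r := x mod g) in *.
  assert (j < n) by nia.
  exists ((g - 1) * j + r). split; [nia|].
  unfold p1. replace ((g - 1) * j + r - 1) with ((g - 1) * j + (r - 1)) by lia.
  rewrite <- (Nat.div_unique ((g - 1) * j + (r - 1)) (g - 1) j (r - 1)) by lia.
  rewrite <- (Nat.mod_unique ((g - 1) * j + (r - 1)) (g - 1) j (r - 1)) by lia.
  nia.
Qed.

Lemma Und_mult x : x <= H -> ~ In x (dels H t1 g B t1) -> x mod g = 0.
Proof.
  intros Hx Hn'. apply NNPP; intros Hm. destruct (p1_surj x Hx Hm) as [s [Hs Hp]].
  apply Hn'. apply (dels_in H t1 g B t1 s); auto.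
  unfold choose_turn. destruct (s <=? t1) eqn:E; [rewrite Hp; auto|apply Nat.leb_gt in E; lia].
Qed.

Definition Pk k x := (x <= H /\ ~ In x (dels H t1 g B t1)) /\ lev_le H (B t1) k x.

Lemma t1_ge_W : W <= t1. Proof. nia. Qed.

Definition Good k x l := exists f u, B t1 f /\ snd f <= H /\ dst H f x <= k /\
  B (t1 - W) u /\ NoDup l /\
  (forall w, In w l -> created (t1 - W) t1 w /\ disp W w f) /\ snd f <= snd u + length l.

Definition chainOf k x : list V :=
  match excluded_middle_informative (exists l, Good k x l) with
  | left h => proj1_sig (constructive_indefinite_description _ h)
  | right _ => []
  end.

Lemma chainOf_good k x : Pk k x -> Good k x (chainOf k x).
Proof.
  intros [_ [f [Hf [Hs Hd]]]]. unfold chainOf.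
  destruct (excluded_middle_informative _) as [h|h].
  - destruct (constructive_indefinite_description _ h); simpl; auto.
  - exfalso; apply h.
    assert (Hf' : B ((t1 - W) + W) f) by (replace (t1 - W + W) with t1 by (pose t1_ge_W; lia); auto).
    destruct (chain (t1 - W) W f Hf') as [u [l [Hu [Hnd [Hl Hsl]]]]].
    exists l, f, u.
    split; [auto|split;[auto|split;[auto|split;[auto|split;[auto|split;[|auto]]]]]].
    intros w Hw. destruct (Hl w Hw) as [[tau [Ht Hw']] Hdd]. split; auto.
    exists tau; split; auto. pose t1_ge_W; lia.
Qed.

Lemma chainOf_len k x : k <= n -> Pk k x -> W - h0 <= length (chainOf k x).
Proof.
  intros Hk HP. destruct (chainOf_good k x HP) as [f [u [Hf [Hs [Hd [Hu [_ [_ Hl]]]]]]]].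
  assert (Hdd := dst_depth H f x). destruct (B_height _ u Hu) as [Hhu _].
  pose t1_ge_W. lia.
Qed.

Lemma mult_sep x y : x mod g = 0 -> y mod g = 0 -> x <> y -> x + g <= y \/ y + g <= x.
Proof.
  intros Hx Hy Hne. assert (Hg0 : g <> 0) by lia.
  assert (Hdx := Nat.div_mod x g Hg0). assert (Hdy := Nat.div_mod y g Hg0).
  rewrite Hx in Hdx; rewrite Hy in Hdy.
  destruct (lt_eq_lt_dec (x / g) (y / g)) as [[Hl|He]|Hl].
  - left. assert (g * (x / g + 1) <= g * (y / g)) by (apply Nat.mul_le_mono_l; lia). nia.
  - exfalso. apply Hne. lia.
  - right. assert (g * (y / g + 1) <= g * (x / g)) by (apply Nat.mul_le_mono_l; lia). nia.
Qed.

Lemma chainOf_disj k x y w : k <= n -> Pk k x -> Pk k y -> x <> y ->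
  In w (chainOf k x) -> ~ In w (chainOf k y).
Proof.
  intros Hk HPx HPy Hne Hwx Hwy.
  assert (Hmx : x mod g = 0) by (destruct HPx as [[? ?] _]; apply Und_mult; auto).
  assert (Hmy : y mod g = 0) by (destruct HPy as [[? ?] _]; apply Und_mult; auto).
  assert (Hsep := mult_sep x y Hmx Hmy Hne).
  destruct (chainOf_good k x HPx) as [fx [ux [_ [Hsx [Hdx [_ [_ [Hlx _]]]]]]]].
  destruct (chainOf_good k y HPy) as [fy [uy [_ [Hsy [Hdy [_ [_ [Hly _]]]]]]]].
  destruct (Hlx w Hwx) as [_ Dx]. destruct (Hly w Hwy) as [_ Dy].
  unfold disp, dst in *. lia.
Qed.

Lemma window_len a m : (forall tau, a <= tau < a + m -> 3 * length (Sf tau) <= n) ->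
  3 * length (flat_map Sf (seq a m)) <= m * n.
Proof.
  revert a; induction m; intros a Ha; simpl; auto.
  rewrite length_app. assert (H1 := Ha a ltac:(lia)).
  assert (H2 := IHm (S a) (fun tau Ht => Ha tau ltac:(lia))). lia.
Qed.

Lemma chain_bound k : k <= n -> cnt (Pk k) (S H) <= n - h0.
Proof.
  intros Hk. unfold cnt, cntl.
  set (X := filter (fun x => decP (Pk k x)) (seq 0 (S H))).
  assert (HX : forall x, In x X -> Pk k x) by (intros x Hx; apply in_filt in Hx; tauto).
  assert (Hnd : NoDup (concat (map (chainOf k) X))).
  { apply NoDup_concat_map.
    - apply nodup_filt.
    - intros x Hx. destruct (chainOf_good k x (HX x Hx)) as [? [? [? [? [? [? [? [? ?]]]]]]]]; auto.
    - intros x y w Hx Hy Hne. apply chainOf_disj; auto. }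
  assert (Hlen := length_concat_map (chainOf k) X (W - h0) (fun x Hx => chainOf_len k x Hk (HX x Hx))).
  assert (Hinc : incl (concat (map (chainOf k) X)) (flat_map Sf (seq (t1 - W + 1) W))).
  { intros w Hw. apply in_concat in Hw as [l [Hl Hwl]]. apply in_map_iff in Hl as [x [<- Hx]].
    destruct (chainOf_good k x (HX x Hx)) as [f [u [_ [_ [_ [_ [_ [Hl _]]]]]]]].
    destruct (Hl w Hwl) as [[tau [Ht Hw]] _]. apply in_flat_map. exists tau; split; auto.
    apply in_seq. pose t1_ge_W; lia. }
  assert (Hle := NoDup_incl_length Hnd Hinc).
  assert (Hwin : 3 * length (flat_map Sf (seq (t1 - W + 1) W)) <= W * n).
  { apply window_len. intros tau Ht. apply Sf_len. pose t1_ge_W. nia. }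
  fold X. nia.
Qed.


Lemma Hall_t1 k : cnt (Pk k) (S H) <= k.
Proof.
  destruct (le_lt_dec k n) as [Hk|Hk].
  - destruct (Nat.eq_dec (cnt (Pk k) (S H)) 0) as [E|E]; [lia|].
    destruct (cnt_pos (Pk k) (S H)) as [x [_ [_ [u [Hu [Hs Hd]]]]]]; [lia|].
    assert (Hdd := dst_depth H u x). destruct (B_height _ u Hu) as [Hhu _].
    assert (n - h0 <= k) by lia.
    assert (Hc' := chain_bound k Hk). lia.
  - apply (Nat.le_trans _ (S n)); [|lia].
    apply (cnt_image _ _ _ (fun j => g * j)).
    intros x Hx [[Hxh Hxn] _]. assert (Hm := Und_mult x Hxh Hxn).
    assert (Hg0 : g <> 0) by lia. assert (Hd := Nat.div_mod x g Hg0). rewrite Hm in Hd.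
    exists (x / g). split; [nia|lia].
Qed.

Definition Pt t k x := (x <= H /\ ~ In x (dels H t1 g B t)) /\ lev_le H (B t) k x.

Definition Inv t := (forall v, B t v -> snd v < H) /\ (forall k, cnt (Pt t k) (S H) <= k).

Lemma NoRow_early t v : t <= t1 -> B t v -> snd v < H.
Proof. intros Ht Hv. destruct (B_height t v Hv). nia. Qed.

Lemma lev_step t k x : (forall v, B t v -> snd v < H) ->
  lev_le H (B (S t)) k x -> lev_le H (B t) (S k) x.
Proof.
  intros NR [u [Hu [Hs Hd]]]. apply B_step in Hu as [Hu|Hu].
  - exists u; repeat split; auto.
  - destruct (Sf_prop t u Hu) as [_ [_ [Hb|[w [Hw Ha]]]]].
    + exists u; repeat split; auto.
    + exists w. assert (Hwh := NR w Hw). split; auto. split; [lia|].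
      assert (Hda := dst_adj H w u x Ha ltac:(lia) Hs). lia.
Qed.

Lemma Inv_step t : t1 <= t -> Inv t -> Inv (S t).
Proof.
  intros Ht [NR Hall].
  assert (Hdl := dels_step_gt H t1 g B t Ht).
  set (prev := dels H t1 g B t) in *.
  split.
  - intros v Hv. apply B_step in Hv as [Hv|Hv]; [apply NR; auto|].
    destruct (Sf_prop t v Hv) as [Hvert [Hndel [Hb|[w [Hw Ha]]]]]; [apply NR; auto|].
    destruct (Nat.lt_ge_cases (snd v) H) as [ok|Hge]; auto. exfalso.
    assert (Hwh := NR w Hw).
    destruct v as [x y]. unfold vert in Hvert; cbn [fst snd] in *.
    assert (y = H) by (unfold adj, edge8 in Ha; simpl in Ha; lia). subst y.
    assert (Hlev : lev_le H (B t) 1 x).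
    { exists w. split; auto. split; [lia|]. unfold dst; destruct w as [a b];
      unfold adj, edge8, vert in Ha; simpl in *; lia. }
    assert (Hnp : ~ In x prev).
    { intros Hin. apply Hndel. apply dels_deleted. apply (dels_mono H t1 g B t); auto. }
    destruct (greedy H (B t) prev) as [x0|] eqn:E.
    + destruct (greedy_some H (B t) prev x0 E) as [Hx0 [Hnp0 Hmin]].
      assert (Hl0 := Hmin x 1 Hvert Hnp Hlev).
      destruct (Nat.eq_dec x x0) as [<-|Hne].
      * apply Hndel. apply dels_deleted. rewrite Hdl. left; auto.
      * assert (2 <= cnt (Pt t 1) (S H)).
        { apply (cnt_two _ _ x x0); try lia; auto; split; auto. }
        specialize (Hall 1). lia.
    + apply (greedy_none H (B t) prev E x 1 Hvert Hnp Hlev).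
  - intros k. destruct (greedy H (B t) prev) as [x0|] eqn:E.
    + destruct (Nat.eq_dec (cnt (Pt (S t) k) (S H)) 0) as [Z|Z]; [lia|].
      destruct (cnt_pos (Pt (S t) k) (S H) ltac:(lia)) as [y [Hy [[Hyh Hyn] Hyl]]].
      rewrite Hdl in Hyn.
      destruct (greedy_some H (B t) prev x0 E) as [Hx0 [Hnp0 Hmin]].
      assert (Hyl' := lev_step t k y NR Hyl).
      assert (Hl0 := Hmin y (S k) Hyh (fun h => Hyn (or_intror h)) Hyl').
      assert (cnt (Pt (S t) k) (S H) + 1 <= cnt (Pt t (S k)) (S H)).
      { apply (cnt_remove _ _ _ x0); [lia|split; auto|].
        intros z Hz [[Hzh Hzn] Hzl]. rewrite Hdl in Hzn. split.
        - split; [split; auto|apply lev_step; auto]. intros h; apply Hzn; right; auto.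
        - intros ->. apply Hzn; left; auto. }
      specialize (Hall (S k)). lia.
    + rewrite (cnt_zero (Pt (S t) k) (S H)); [lia|]. intros z Hz [[Hzh Hzn] Hzl]. rewrite Hdl in Hzn.
      apply (greedy_none H (B t) prev E z (S k) Hzh Hzn). apply lev_step; auto.
Qed.

Lemma Inv_all t : t1 <= t -> Inv t.
Proof.
  induction 1.
  - split; [intros v; apply NoRow_early; auto|]. intros k. apply Hall_t1.
  - apply Inv_step; auto.
Qed.

Lemma NoRow_all t v : B t v -> snd v < H.
Proof.
  destruct (le_lt_dec t t1).
  - apply NoRow_early; auto.
  - apply (proj1 (Inv_all t ltac:(lia))).
Qed.

Lemma conj1 t v : 1 <= t -> sig H t1 g t (hist B t) = Some v -> row H v /\ ~ B (t - 1) v.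
Proof.
  intros Ht. rewrite sig_hist by auto.
  destruct (choose_turn H t1 g B t (dels H t1 g B (t - 1))) as [x|] eqn:E; simpl; [|discriminate].
  intros Hv; injection Hv as <-. split.
  - split; simpl; auto. unfold choose_turn in E.
    destruct (t <=? t1) eqn:E'.
    + injection E as <-. apply Nat.leb_le in E'. apply p1_le; lia.
    + apply greedy_some in E. tauto.
  - intros Hb. apply NoRow_all in Hb. simpl in Hb. lia.
Qed.

Definition grid : list V := flat_map (fun y => map (fun x => (x, y)) (seq 0 (S y))) (seq 0 H).

Lemma in_grid v : vert v -> snd v < H -> In v grid.
Proof.
  destruct v as [x y]; unfold vert; simpl; intros Hv Hy. unfold grid.
  apply in_flat_map. exists y; split; [apply in_seq; lia|]. apply in_map_iff.
  exists x; split; auto. apply in_seq; lia.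
Qed.

Lemma conj2 : exists T, forall t, T <= t -> forall v, B t v -> B T v.
Proof.
  destruct (stabilize (fun t => cntl (B t) grid) (length grid)) as [T HT].
  - intros t. apply cntl_mono. intros x _ Hx. apply (B_mono t); auto.
  - intros t. apply cntl_le_length.
  - exists T. intros t Ht v Hv. apply NNPP; intros Hnot.
    assert (cntl (B T) grid < cntl (B t) grid).
    { apply (cntl_strict _ _ _ v); auto.
      - intros x _ Hx. apply (B_mono T); auto.
      - apply in_grid; [apply (B_height t v Hv)|apply (NoRow_all t v Hv)]. }
    specialize (HT t Ht). simpl in HT. lia.
Qed.

End Game.

Local Close Scope nat_scope.
Open Scope R_scope.

Theorem proposition5p1 (c : R) (hc : c < 1 / 6) (B0 : list V)
  (hB0 : forall v, In v B0 -> vert v) :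
  exists (H : nat) (sigma : cstrategy),
    forall B : nat -> V -> Prop,
      legal_play c B0 sigma B ->
      (* the strategy only deletes non-occupied vertices of row H *)
      (forall (t : nat) (v : V), (1 <= t)%nat ->
         sigma t (hist B t) = Some v -> row H v /\ ~ B (t - 1)%nat v) /\
      (* Container wins: after some time no new vertices become occupied *)
      (exists T : nat, forall t : nat, (T <= t)%nat ->
         forall v, B t v -> B T v).
Proof.
  set (h0 := list_max (map snd B0)).
  set (n := (3 * h0 + 3)%nat). set (g := (4 * n)%nat). set (Hh := (g * n)%nat).
  set (t1 := (Hh - n)%nat).
  exists Hh, (sig Hh t1 g). intros B [HB0 HSt].
  set (Sf := fun t => match le_lt_dec 1 t with
                      | left h => proj1_sig (constructive_indefinite_description _ (HSt t h))
                      | right _ => nil end).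
  assert (HS : forall t, (1 <= t)%nat ->
    (INR (length (Sf t)) <= c * sqrt (INR t))%R /\
    (forall v, B t v <-> B (t-1)%nat v \/ In v (Sf t)) /\
    (forall v, In v (Sf t) -> vert v /\ ~ deleted (sig Hh t1 g) B t v /\
                              (B (t-1)%nat v \/ exists u, B (t-1)%nat u /\ adj u v))).
  { intros t Ht. unfold Sf. destruct (le_lt_dec 1 t) as [h|h]; [|lia].
    destruct (constructive_indefinite_description _ (HSt t h)) as [S HSS]. simpl. exact HSS. }
  assert (Hh0 : forall v, In v B0 -> (snd v <= h0)%nat /\ vert v).
  { intros v Hv. split; [|auto]. unfold h0.
    assert (Hf : Forall (fun k => (k <= list_max (map snd B0))%nat) (map snd B0))
      by (apply list_max_le; lia).
    rewrite Forall_forall in Hf. apply Hf. apply in_map; auto. }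
  split.
  - intros t v Ht Hs. apply (conj1 c B0 B Sf h0 n g Hh t1 (2 * h0 + 2)%nat); auto.
  - apply (conj2 c B0 B Sf h0 n g Hh t1 (2 * h0 + 2)%nat); auto.
Qed.
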